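(* For fixed positive integer $t$, the two-variable function $(\rho,k)\mapsto\tilde L_0(\rho,k,t)$ (on $1<\rho<t$, $k>0$) has partial derivatives \[ \frac{\partial}{\partial k}\tilde L_0(\rho,k,t)=\frac{\rho-1}{k}\quad\text{and}\quad \frac{\partial}{\partial\rho}\tilde L_0(\rho,k,t)=\log(\rho k)-y_t(\rho). \]
   Context: $d_i=2^{\binom i2}i!$. For positive integer $t$ and real $1<\rho<t$, $x_t(\rho),y_t(\rho)$ denote the unique reals $x,y$ with $\sum_{i=1}^t e^{x+iy}d_i^{-1}=1$ and $\sum_{i=1}^t ie^{x+iy}d_i^{-1}=\rho$. $\tilde P_{\rho,t}=\{(p_i)_{i=1}^t\in[0,1]^t:\sum_ip_i=1,\sum_iip_i=\rho\}$, and $\tilde L_0(\rho,k,t)=\sup_{\mathbf p\in\tilde P_{\rho,t}}\{\rho\log(\rho k)-\log k-\rho+1-\sum_ip_i\log(p_id_i)\}$ (with $0\log0=0$). Logarithms are natural. *)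

(* Defs.v *)
From Stdlib Require Import Reals ClassicalEpsilon Factorial Binomial.
From Coquelicot Require Import Coquelicot.
Open Scope R_scope.

Definition dd (i : nat) : R :=
  2 ^ (Nat.div (i * (i - 1)) 2) * INR (Factorial.fact i).

Definition xy_eqs (t : nat) (rho : R) (xy : R * R) : Prop :=
  sum_n_m (fun i => exp (fst xy + INR i * snd xy) / dd i) 1 t = 1 /\
  sum_n_m (fun i => INR i * exp (fst xy + INR i * snd xy) / dd i) 1 t = rho.

(* the (by hypothesis unique) solution, picked by choice *)
Definition xy_t (t : nat) (rho : R) : R * R :=
  epsilon (inhabits (0, 0)) (xy_eqs t rho).
Definition x_t (t : nat) (rho : R) : R := fst (xy_t t rho).
Definition y_t (t : nat) (rho : R) : R := snd (xy_t t rho).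

(* tilde P_{rho,t}: p indexed by 1..t (values outside irrelevant) *)
Definition Ptilde (rho : R) (t : nat) (p : nat -> R) : Prop :=
  (forall i, (1 <= i <= t)%nat -> 0 <= p i <= 1) /\
  sum_n_m p 1 t = 1 /\
  sum_n_m (fun i => INR i * p i) 1 t = rho.

Definition plogpd (p d : R) : R :=
  if Req_EM_T p 0 then 0 else p * ln (p * d).

Definition L0_objective (rho k : R) (t : nat) (p : nat -> R) : R :=
  rho * ln (rho * k) - ln k - rho + 1 - sum_n_m (fun i => plogpd (p i) (dd i)) 1 t.

Definition L0 (rho k : R) (t : nat) : R :=
  real (Lub_Rbar (fun v => exists p, Ptilde rho t p /\ v = L0_objective rho k t p)).

(* Main.v *)
Require Import Defs.
From Stdlib Require Import Reals Lra Lia ClassicalEpsilon Arith.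
From Coquelicot Require Import Coquelicot.
Open Scope R_scope.

Lemma sumR_plus (u v : nat -> R) n m :
  sum_n_m (fun k => u k + v k) n m = sum_n_m u n m + sum_n_m v n m.
Proof. exact (sum_n_m_plus u v n m). Qed.

Lemma sumR_scal (a : R) (u : nat -> R) n m :
  sum_n_m (fun k => a * u k) n m = a * sum_n_m u n m.
Proof. exact (sum_n_m_mult_l a u n m). Qed.

Lemma sumR_ext (u v : nat -> R) n m :
  (forall k, (n <= k <= m)%nat -> u k = v k) -> sum_n_m u n m = sum_n_m v n m.
Proof. apply sum_n_m_ext_loc. Qed.

Lemma sumR_le (u v : nat -> R) n m :
  (forall k, (n <= k <= m)%nat -> u k <= v k) -> sum_n_m u n m <= sum_n_m v n m.
Proof.
  induction m as [|m IH]; intros H.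
  - destruct n as [|n].
    + rewrite !sum_n_n. apply H; lia.
    + rewrite !sum_n_m_zero by lia. apply Rle_refl.
  - destruct (le_lt_dec n (S m)) as [h|h].
    + destruct (Nat.eq_dec n (S m)) as [->|hn].
      * rewrite !sum_n_n. apply H; lia.
      * rewrite !sum_n_Sm by lia. unfold plus; simpl.
        apply Rplus_le_compat. apply IH; intros; apply H; lia. apply H; lia.
    + rewrite !sum_n_m_zero by lia. apply Rle_refl.
Qed.

Lemma sumR_zero n m : sum_n_m (fun _ => 0) n m = 0.
Proof. exact (sum_n_m_const_zero n m). Qed.

Lemma sumR_two (f : nat -> R) t : (2 <= t)%nat ->
  (forall i, (1 < i < t)%nat -> f i = 0) -> sum_n_m f 1 t = f 1%nat + f t.
Proof.
  intros ht H. rewrite sum_Sn_m by lia. unfold plus; simpl.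
  destruct t as [|t']; [lia|].
  rewrite sum_n_Sm by lia. unfold plus; simpl.
  rewrite (sumR_ext f (fun _ => 0)) by (intros; apply H; lia).
  rewrite sumR_zero. ring.
Qed.

Lemma sumR_single_le (f : nat -> R) n m i :
  (forall k, (n <= k <= m)%nat -> 0 <= f k) -> (n <= i <= m)%nat ->
  f i <= sum_n_m f n m.
Proof.
  intros H hi.
  rewrite (sum_n_m_Chasles f n (i - 1) m) by lia.
  assert (e : (S (i - 1) = i \/ (n = 0 /\ i = 0))%nat) by lia.
  destruct e as [e|[-> ->]].
  - rewrite e. rewrite (sum_Sn_m f i m) by lia. unfold plus; simpl.
    assert (0 <= sum_n_m f n (i - 1)).
    { destruct (le_lt_dec n (i-1)).
      + rewrite <- (sumR_zero n (i-1)). apply sumR_le; intros; apply H; lia.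
      + rewrite sum_n_m_zero by lia. apply Rle_refl. }
    assert (0 <= sum_n_m f (S i) m).
    { rewrite <- (sumR_zero (S i) m). apply sumR_le; intros; apply H; lia. }
    lra.
  - simpl. idtac.
    rewrite sum_n_n. unfold plus; simpl.
    assert (0 <= sum_n_m f 1 m).
    { rewrite <- (sumR_zero 1 m). apply sumR_le; intros; apply H; lia. }
    assert (0 <= f 0%nat) by (apply H; lia). lra.
Qed.

Lemma is_derive_sumR (g g' : nat -> R -> R) n m x :
  (forall i, (n <= i <= m)%nat -> is_derive (g i) x (g' i x)) ->
  is_derive (fun y => sum_n_m (fun i => g i y) n m) x (sum_n_m (fun i => g' i x) n m).
Proof.
  induction m as [|m IH]; intros H.
  - destruct n as [|n].
    + apply (is_derive_ext (g 0%nat)). intros; rewrite sum_n_n; auto.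
      rewrite sum_n_n. apply H; lia.
    + apply (is_derive_ext (fun _ => 0)). intros; rewrite sum_n_m_zero by lia; auto.
      rewrite sum_n_m_zero by lia. apply (is_derive_const 0).
  - destruct (le_lt_dec n (S m)) as [h|h].
    + destruct (Nat.eq_dec n (S m)) as [->|hn].
      * apply (is_derive_ext (g (S m))). intros; rewrite sum_n_n; auto.
        rewrite sum_n_n. apply H; lia.
      * apply (is_derive_ext (fun y => sum_n_m (fun i => g i y) n m + g (S m) y)).
        intros; rewrite sum_n_Sm by lia; auto.
        rewrite sum_n_Sm by lia. apply (is_derive_plus (fun y => sum_n_m (fun i => g i y) n m) (g (S m))).
        apply IH; intros; apply H; lia. apply H; lia.
    + apply (is_derive_ext (fun _ => 0)). intros; rewrite sum_n_m_zero by lia; auto.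
      rewrite sum_n_m_zero by lia. apply (is_derive_const 0).
Qed.

Lemma dd_ge1 i : 1 <= dd i.
Proof.
  unfold dd. assert (1 <= 2 ^ (Nat.div (i * (i - 1)) 2)) by (apply pow_R1_Rle; lra).
  assert (1 <= INR (fact i)).
  { pose proof (lt_O_fact i). apply le_INR in H0. simpl in H0. exact H0. }
  nra.
Qed.
Lemma dd_pos i : 0 < dd i.
Proof. pose proof (dd_ge1 i); lra. Qed.
Lemma dd1 : dd 1 = 1.
Proof. unfold dd. simpl. ring. Qed.

Lemma ln_le_sub1 u : 0 < u -> ln u <= u - 1.
Proof. intros. pose proof (exp_ineq1_le (ln u)). rewrite exp_ln in H0; lra. Qed.

Lemma plogpd_ge p d a : 0 <= p -> 0 < d -> p * a + p - exp a / d <= plogpd p d.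
Proof.
  intros hp hd. unfold plogpd. destruct (Req_EM_T p 0) as [->|hn].
  - assert (0 < exp a / d) by (apply Rdiv_lt_0_compat; [apply exp_pos|lra]). lra.
  - assert (hp' : 0 < p) by lra.
    assert (hu : 0 < exp a / (p * d)) by (apply Rdiv_lt_0_compat; [apply exp_pos|nra]).
    pose proof (ln_le_sub1 _ hu) as h.
    rewrite ln_div in h by (try apply exp_pos; nra). rewrite ln_exp in h.
    assert (p * (exp a / (p * d)) = exp a / d) by (field; lra).
    nra.
Qed.

Lemma plogpd_eq d a : 0 < d -> plogpd (exp a / d) d = exp a / d * a.
Proof.
  intros hd. unfold plogpd. destruct (Req_EM_T (exp a / d) 0) as [e|hn].
  - exfalso. assert (0 < exp a / d) by (apply Rdiv_lt_0_compat; [apply exp_pos|lra]). lra.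
  - f_equal. replace (exp a / d * d) with (exp a) by (field; lra). apply ln_exp.
Qed.

Lemma gibbs t r p x0 y0 :
  Ptilde r t p ->
  sum_n_m (fun i => exp (x0 + INR i * y0) / dd i) 1 t = 1 ->
  x0 + r * y0 <= sum_n_m (fun i => plogpd (p i) (dd i)) 1 t.
Proof.
  intros [h01 [hs hm]] hq.
  eapply Rle_trans; [| apply (sumR_le (fun i => x0 * p i + y0 * (INR i * p i) + (p i + (-1) * (exp (x0 + INR i * y0) / dd i))))].
  - rewrite !sumR_plus, !sumR_scal, hs, hm, hq. lra.
  - intros k hk. pose proof (plogpd_ge (p k) (dd k) (x0 + INR k * y0) (proj1 (h01 k hk)) (dd_pos k)). lra.
Qed.

Lemma L0_bounds (P : (nat -> R) -> Prop) (obj : (nat -> R) -> R) lo up p0 :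
  (forall p, P p -> obj p <= up) -> P p0 -> lo <= obj p0 ->
  lo <= real (Lub_Rbar (fun v => exists p, P p /\ v = obj p)) <= up.
Proof.
  intros hu hp0 hl.
  destruct (Lub_Rbar_correct (fun v => exists p, P p /\ v = obj p)) as [ub lub].
  assert (h1 : Rbar_le (obj p0) (Lub_Rbar (fun v => exists p, P p /\ v = obj p))).
  { apply ub. exists p0; auto. }
  assert (h2 : Rbar_le (Lub_Rbar (fun v => exists p, P p /\ v = obj p)) up).
  { apply lub. intros v [p [hp ->]]. simpl. apply hu; auto. }
  destruct (Lub_Rbar (fun v => exists p, P p /\ v = obj p)) as [l| |]; simpl in *; try contradiction.
  lra.
Qed.

Definition FF t rho y := sum_n_m (fun i => (INR i - rho) * exp (INR i * y) / dd i) 1 t.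

Lemma FF_cont t rho : continuity (FF t rho).
Proof.
  intro x. apply derivable_continuous_pt.
  assert (H : is_derive (FF t rho) x
    (sum_n_m (fun i => (fun i y => (INR i - rho) * (INR i * exp (INR i * y)) / dd i) i x) 1 t)).
  { unfold FF. apply (is_derive_sumR (fun i y => (INR i - rho) * exp (INR i * y) / dd i) (fun i y => (INR i - rho) * (INR i * exp (INR i * y)) / dd i) 1 t x).
    intros i hi. pose proof (dd_pos i). auto_derive; [auto| field; lra]. }
  apply is_derive_Reals in H. eexists. exact H.
Qed.

Lemma FF_low t rho : (2 <= t)%nat -> 1 < rho -> rho < INR t ->
  exists y, FF t rho y < 0.
Proof.
  intros ht h1 h2.
  assert (htp : 2 <= INR t) by (replace 2 with (INR 2) by (simpl; ring); apply le_INR; auto).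
  set (c := (rho - 1) / (INR t * INR t + 1)).
  assert (hc0 : 0 < c) by (unfold c; apply Rdiv_lt_0_compat; nra).
  assert (hc1 : c * (INR t * INR t + 1) = rho - 1) by (unfold c; field; nra).
  exists (ln c).
  assert (hy : ln c < 0).
  { rewrite <- ln_1. apply ln_increasing; auto. nra. }
  set (y := ln c) in *.
  assert (ey : exp y = c) by (unfold y; apply exp_ln; auto).
  unfold FF. rewrite sum_Sn_m by lia. unfold plus; simpl.
  assert (hb : sum_n_m (fun i => (INR i - rho) * exp (INR i * y) / dd i) 2 t
               <= sum_n_m (fun _ => INR t * exp (2 * y)) 2 t).
  { apply sumR_le. intros k hk. pose proof (dd_ge1 k).
    assert (INR k <= INR t) by (apply le_INR; lia).
    assert (2 <= INR k) by (replace 2 with (INR 2) by (simpl; ring); apply le_INR; lia).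
    assert (exp (INR k * y) <= exp (2 * y)) by (apply exp_le_3 || (destruct (Req_dec (INR k * y) (2*y)) as [e|e]; [rewrite e; lra| left; apply exp_increasing; nra])).
    assert (0 < exp (INR k * y)) by apply exp_pos.
    assert (exp (INR k * y) / dd k <= exp (INR k * y)).
    { unfold Rdiv. rewrite <- (Rmult_1_r (exp (INR k * y))) at 2. apply Rmult_le_compat_l; [lra|].
      rewrite <- Rinv_1. apply Rinv_le_contravar; lra. }
    assert (0 <= exp (INR k * y) / dd k) by (apply Rlt_le, Rdiv_lt_0_compat; lra).
    unfold Rdiv in *. nra. }
  rewrite sum_n_m_const in hb.
  assert (INR (S t - 2) <= INR t) by (apply le_INR; lia).
  rewrite dd1 in *.
  replace (exp (2 * y)) with (c * c) in hb by (replace (2 * y) with (y + y) by ring; rewrite exp_plus, ey; ring).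
  change (INR 1) with 1. rewrite Rmult_1_l, ey.
  assert (0 < INR t * (c * c)) by (apply Rmult_lt_0_compat; nra).
  assert (INR (S t - 2) * (INR t * (c * c)) <= INR t * (INR t * (c * c))) by (apply Rmult_le_compat_r; lra).
  assert (0 <= INR (S t - 2)) by apply pos_INR.
  nra.
Qed.

Lemma FF_high t rho : (2 <= t)%nat -> 1 < rho -> rho < INR t ->
  exists y, 0 < FF t rho y.
Proof.
  intros ht h1 h2.
  destruct t as [|t']; [lia|].
  set (t := S t') in *.
  assert (htp : 2 <= INR t) by (replace 2 with (INR 2) by (simpl; ring); apply le_INR; auto).
  pose proof (dd_pos t) as hd.
  set (C := INR t * INR t * dd t / (INR t - rho)).
  assert (hC0 : 0 < C) by (unfold C; apply Rdiv_lt_0_compat; [apply Rmult_lt_0_compat; nra | lra]).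
  assert (hC1 : C * (INR t - rho) = INR t * INR t * dd t) by (unfold C; field; lra).
  exists (ln (C + 1)).
  assert (hy : 0 < ln (C + 1)).
  { rewrite <- ln_1. apply ln_increasing; lra. }
  set (y := ln (C + 1)) in *.
  assert (ey : exp y = C + 1) by (unfold y; apply exp_ln; lra).
  set (E := exp (INR t' * y)).
  assert (hE : 0 < E) by apply exp_pos.
  unfold FF. unfold t at 1. rewrite sum_n_Sm by lia.
  match goal with |- context [plus ?a ?b] => change (plus a b) with (a + b) end.
  assert (hb : sum_n_m (fun _ => - (INR t * E)) 1 t'
     <= sum_n_m (fun i => (INR i - rho) * exp (INR i * y) / dd i) 1 t').
  { apply sumR_le. intros k hk. pose proof (dd_ge1 k).
    assert (INR k <= INR t') by (apply le_INR; lia).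
    assert (0 <= INR k) by apply pos_INR.
    assert (exp (INR k * y) <= E).
    { unfold E. destruct (Req_dec (INR k * y) (INR t' * y)) as [e|e]; [rewrite e; lra| left; apply exp_increasing; nra]. }
    assert (0 < exp (INR k * y)) by apply exp_pos.
    assert (exp (INR k * y) / dd k <= exp (INR k * y)).
    { unfold Rdiv. rewrite <- (Rmult_1_r (exp (INR k * y))) at 2. apply Rmult_le_compat_l; [lra|].
      rewrite <- Rinv_1. apply Rinv_le_contravar; lra. }
    assert (0 <= exp (INR k * y) / dd k) by (apply Rlt_le, Rdiv_lt_0_compat; lra).
    unfold Rdiv in *. nra. }
  rewrite sum_n_m_const in hb.
  assert (INR (S t' - 1) <= INR t) by (apply le_INR; unfold t; lia).
  assert (0 <= INR (S t' - 1)) by apply pos_INR.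
  assert (INR (S t' - 1) * (INR t * E) <= INR t * (INR t * E)) by (apply Rmult_le_compat_r; nra).
  replace (INR (S t') * y) with (INR t' * y + y) by (rewrite S_INR; ring).
  rewrite exp_plus, ey. fold E.
  assert (e2 : (INR (S t') - rho) * (E * (C + 1)) / dd (S t') = E * (INR t * INR t) + E * (INR t - rho) / dd t).
  { unfold t. fold t. replace (INR (S t')) with (INR t) by reflexivity.
    field_simplify_eq; [|lra]. nra. }
  rewrite e2.
  assert (0 < E * (INR t - rho) / dd t) by (apply Rdiv_lt_0_compat; nra).
  nra.
Qed.

Lemma xy_exists t rho : (2 <= t)%nat -> 1 < rho -> rho < INR t ->
  exists xy, xy_eqs t rho xy.
Proof.
  intros ht h1 h2.
  destruct (FF_low t rho ht h1 h2) as [a ha].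
  destruct (FF_high t rho ht h1 h2) as [b hb].
  destruct (IVT_gen (FF t rho) a b 0 (FF_cont t rho)) as [y [_ hy]].
  { split; [apply Rle_trans with (FF t rho a); [apply Rmin_l | lra] |
            apply Rle_trans with (FF t rho b); [lra | apply Rmax_r]]. }
  set (Z := sum_n_m (fun i => exp (INR i * y) / dd i) 1 t).
  assert (hZ : 0 < Z).
  { apply Rlt_le_trans with (exp (INR 1 * y) / dd 1).
    - apply Rdiv_lt_0_compat; [apply exp_pos | apply dd_pos].
    - apply (sumR_single_le (fun i => exp (INR i * y) / dd i)); [|lia].
      intros; apply Rlt_le, Rdiv_lt_0_compat; [apply exp_pos | apply dd_pos]. }
  exists (- ln Z, y). unfold xy_eqs; simpl.
  assert (e : forall i, exp (- ln Z + INR i * y) / dd i = / Z * (exp (INR i * y) / dd i)).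
  { intro i. rewrite exp_plus, exp_Ropp, exp_ln by auto. field. pose proof (dd_pos i); lra. }
  split.
  - rewrite (sumR_ext _ (fun i => / Z * (exp (INR i * y) / dd i))) by (intros; apply e).
    rewrite sumR_scal. fold Z. field. lra.
  - rewrite (sumR_ext _ (fun i => / Z * (INR i * exp (INR i * y) / dd i))).
    2:{ intros k _. rewrite exp_plus, exp_Ropp, exp_ln by auto. field. split; [pose proof (dd_pos k)|]; lra. }
    rewrite sumR_scal.
    unfold FF in hy.
    rewrite (sumR_ext _ (fun i => INR i * exp (INR i * y) / dd i + (- rho) * (exp (INR i * y) / dd i))) in hy
      by (intros; field; pose proof (dd_pos k); lra).
    rewrite sumR_plus, sumR_scal in hy. fold Z in hy.
    assert (sum_n_m (fun i => INR i * exp (INR i * y) / dd i) 1 t = rho * Z) by lra.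
    rewrite H. field. lra.
Qed.

Lemma deriv_squeeze (f lo up : R -> R) x l d :
  0 < d -> (forall y, Rabs (y - x) < d -> lo y <= f y <= up y) ->
  lo x = f x -> up x = f x -> is_derive lo x l -> is_derive up x l -> is_derive f x l.
Proof.
  intros hd hb hlo hup dlo dup.
  apply is_derive_Reals in dlo. apply is_derive_Reals in dup. apply is_derive_Reals.
  intros eps he.
  destruct (dlo eps he) as [d1 h1]. destruct (dup eps he) as [d2 h2].
  assert (hm : 0 < Rmin d (Rmin d1 d2)) by (repeat apply Rmin_pos; auto; apply cond_pos).
  exists (mkposreal _ hm). simpl. intros h hh0 hh.
  assert (ha : Rabs h < d) by (eapply Rlt_le_trans; [exact hh| apply Rmin_l]).
  assert (hb1 : Rabs h < d1) by (eapply Rlt_le_trans; [exact hh| eapply Rle_trans; [apply Rmin_r| apply Rmin_l]]).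
  assert (hb2 : Rabs h < d2) by (eapply Rlt_le_trans; [exact hh| eapply Rle_trans; [apply Rmin_r| apply Rmin_r]]).
  specialize (h1 h hh0 hb1). specialize (h2 h hh0 hb2).
  assert (hy : Rabs (x + h - x) < d) by (replace (x + h - x) with h by ring; auto).
  specialize (hb _ hy).
  apply Rabs_def2 in h1. apply Rabs_def2 in h2. apply Rabs_def1.
  - destruct (Rlt_or_le 0 h) as [hp|hn].
    + assert ((f (x + h) - f x) / h <= (up (x + h) - up x) / h).
      { unfold Rdiv. apply Rmult_le_compat_r. left; apply Rinv_0_lt_compat; auto. lra. }
      lra.
    + assert (hn' : h < 0) by lra.
      assert ((f (x + h) - f x) / h <= (lo (x + h) - lo x) / h).
      { unfold Rdiv. assert (/ h < 0) by (apply Rinv_lt_0_compat; auto). nra. }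
      lra.
  - destruct (Rlt_or_le 0 h) as [hp|hn].
    + assert ((lo (x + h) - lo x) / h <= (f (x + h) - f x) / h).
      { unfold Rdiv. apply Rmult_le_compat_r. left; apply Rinv_0_lt_compat; auto. lra. }
      lra.
    + assert (hn' : h < 0) by lra.
      assert ((up (x + h) - up x) / h <= (f (x + h) - f x) / h).
      { unfold Rdiv. assert (/ h < 0) by (apply Rinv_lt_0_compat; auto). nra. }
      lra.
Qed.

Theorem lemma34 (t : nat) (ht : (0 < t)%nat) (rho k : R)
  (hrho1 : 1 < rho) (hrhot : rho < INR t) (hk : 0 < k) :
  is_derive (fun k' => L0 rho k' t) k ((rho - 1) / k) /\
  is_derive (fun r => L0 r k t) rho (ln (rho * k) - y_t t rho).
Proof.
  assert (ht2 : (2 <= t)%nat).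
  { destruct (le_lt_dec 2 t) as [h|h]; auto. assert (INR t <= 1) by (replace 1 with (INR 1) by reflexivity; apply le_INR; lia). lra. }
  assert (htr : 2 <= INR t) by (replace 2 with (INR 2) by (simpl; ring); apply le_INR; auto).
  assert (hxy : xy_eqs t rho (xy_t t rho)).
  { unfold xy_t. apply epsilon_spec. apply xy_exists; auto. }
  unfold y_t. destruct (xy_t t rho) as [x0 y0]. destruct hxy as [hq1 hq2]. simpl in hq1, hq2 |- *.
  set (q := fun i => exp (x0 + INR i * y0) / dd i) in *.
  assert (hqpos : forall i, 0 < q i) by (intro i; unfold q; apply Rdiv_lt_0_compat; [apply exp_pos|apply dd_pos]).
  set (c := / (INR t - 1)).
  assert (hc : 0 < c <= 1).
  { unfold c. split. apply Rinv_0_lt_compat; lra. rewrite <- Rinv_1. apply Rinv_le_contravar; lra. }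
  assert (hcc : c * (INR t - 1) = 1) by (unfold c; field; lra).
  set (v := fun i => if Nat.eqb i 1 then - c else if Nat.eqb i t then c else 0).
  assert (ht1 : Nat.eqb t 1 = false) by (apply Nat.eqb_neq; lia).
  assert (v1 : v 1%nat = - c) by reflexivity.
  assert (vt : v t = c) by (unfold v; rewrite ht1, Nat.eqb_refl; reflexivity).
  assert (vmid : forall i, (1 < i < t)%nat -> v i = 0).
  { intros i hi. unfold v. replace (Nat.eqb i 1) with false by (symmetry; apply Nat.eqb_neq; lia).
    replace (Nat.eqb i t) with false by (symmetry; apply Nat.eqb_neq; lia). reflexivity. }
  assert (sv : sum_n_m v 1 t = 0).
  { rewrite (sumR_two v t ht2 vmid). rewrite v1, vt. apply Rplus_opp_l. }
  assert (siv : sum_n_m (fun i => INR i * v i) 1 t = 1).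
  { rewrite sumR_two; [| auto | intros i hi; rewrite vmid; [ring|auto]]. rewrite v1, vt.
    change (INR 1) with 1. lra. }
  assert (vbound : forall i, Rabs (v i) <= 1).
  { intro i. unfold v. destruct (Nat.eqb i 1); [|destruct (Nat.eqb i t)].
    - rewrite Rabs_Ropp, Rabs_right; lra.
    - rewrite Rabs_right; lra.
    - rewrite Rabs_R0; lra. }
  set (p := fun r i => q i + (r - rho) * v i).
  set (delta := Rmin (q 1%nat) (q t)).
  assert (hdelta : 0 < delta) by (apply Rmin_pos; auto).
  assert (ppos : forall r i, Rabs (r - rho) < delta -> 0 < p r i).
  { intros r i hr. unfold p, v. destruct (Nat.eqb i 1) eqn:e1; [|destruct (Nat.eqb i t) eqn:e2].
    - apply Nat.eqb_eq in e1. subst i.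
      assert (delta <= q 1%nat) by apply Rmin_l.
      assert (Rabs ((r - rho) * - c) < delta).
      { rewrite Rabs_mult, Rabs_Ropp, (Rabs_right c) by lra. nra. }
      apply Rabs_def2 in H0. lra.
    - apply Nat.eqb_eq in e2. subst i.
      assert (delta <= q t) by apply Rmin_r.
      assert (Rabs ((r - rho) * c) < delta).
      { rewrite Rabs_mult, (Rabs_right c) by lra. pose proof (Rabs_pos (r - rho)). nra. }
      apply Rabs_def2 in H0. lra.
    - rewrite Rmult_0_r, Rplus_0_r. auto. }
  assert (pP : forall r, Rabs (r - rho) < delta -> Ptilde r t (p r)).
  { intros r hr.
    assert (hs : sum_n_m (p r) 1 t = 1).
    { unfold p. rewrite sumR_plus, sumR_scal, sv. fold q in hq1. lra. }
    split; [|split].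
    - intros i hi. split. left; auto.
      rewrite <- hs. apply sumR_single_le; auto. intros; left; auto.
    - exact hs.
    - unfold p. rewrite (sumR_ext _ (fun i => INR i * q i + (r - rho) * (INR i * v i))) by (intros; ring).
      rewrite sumR_plus, sumR_scal, siv.
      rewrite (sumR_ext _ (fun i => INR i * exp (x0 + INR i * y0) / dd i)) by (intros; unfold q, Rdiv; ring).
      rewrite hq2. lra. }
  set (A := fun r k' => r * ln (r * k') - ln k' - r + 1).
  set (Fp := fun r => sum_n_m (fun i => plogpd (p r i) (dd i)) 1 t).
  assert (bounds : forall r k', Rabs (r - rho) < delta ->
            A r k' - Fp r <= L0 r k' t <= A r k' - (x0 + r * y0)).
  { intros r k' hr. unfold L0. apply (L0_bounds (Ptilde r t) (L0_objective r k' t) _ _ (p r)).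
    - intros p' hp'. unfold L0_objective. pose proof (gibbs t r p' x0 y0 hp' hq1). unfold A. lra.
    - apply pP; auto.
    - unfold L0_objective, A, Fp. lra. }
  assert (Fp0 : Fp rho = x0 + rho * y0).
  { unfold Fp. rewrite (sumR_ext _ (fun i => x0 * q i + y0 * (INR i * exp (x0 + INR i * y0) / dd i))).
    - rewrite sumR_plus, !sumR_scal. fold q in hq1. rewrite hq1, hq2. lra.
    - intros i _. unfold p. rewrite Rminus_diag, Rmult_0_l, Rplus_0_r. unfold q.
      rewrite plogpd_eq by apply dd_pos. unfold Rdiv. ring. }
  assert (r0 : Rabs (rho - rho) < delta) by (rewrite Rminus_diag, Rabs_R0; auto).
  assert (Leq : forall k', L0 rho k' t = A rho k' - (x0 + rho * y0)).
  { intro k'. pose proof (bounds rho k' r0). rewrite Fp0 in H. lra. }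
  split.
  - apply (is_derive_ext (fun k' => A rho k' - (x0 + rho * y0))). intros; rewrite Leq; auto.
    unfold A. auto_derive.
    + split; [nra|split; auto].
    + field. lra.
  - assert (lnq : forall i, ln (p rho i * dd i) = x0 + INR i * y0).
    { intro i. unfold p, q. rewrite Rminus_diag, Rmult_0_l, Rplus_0_r.
      replace (exp (x0 + INR i * y0) / dd i * dd i) with (exp (x0 + INR i * y0)) by (field; pose proof (dd_pos i); lra).
      apply ln_exp. }
    assert (dFp : is_derive Fp rho y0).
    { assert (H := is_derive_sumR (fun i r => plogpd (p r i) (dd i)) (fun i r => v i * (ln (p r i * dd i) + 1)) 1 t rho).
      replace y0 with (sum_n_m (fun i => v i * (ln (p rho i * dd i) + 1)) 1 t).
      - apply H. intros i _.
        apply (is_derive_ext_loc (fun r => p r i * ln (p r i * dd i))).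
        + exists (mkposreal delta hdelta). intros r hr. unfold plogpd.
          destruct (Req_EM_T (p r i) 0) as [e|e]; auto.
          exfalso. assert (0 < p r i) by (apply ppos; exact hr). lra.
        + pose proof (dd_pos i). pose proof (ppos rho i r0). unfold p in *. auto_derive.
          * nra.
          * replace (rho + - rho) with 0 by ring. replace (rho - rho) with 0 by ring.
            rewrite Rmult_0_l, Rplus_0_r. field. nra.
      - rewrite sumR_two; [| auto | intros i hi; rewrite vmid; [ring|auto]].
        rewrite v1, vt, !lnq. change (INR 1) with 1.
        assert (E : -c * (x0 + 1 * y0 + 1) + c * (x0 + INR t * y0 + 1) = c * (INR t - 1) * y0) by ring.
        rewrite hcc, Rmult_1_l in E. rewrite Rmult_1_l. exact E. }
    apply (deriv_squeeze (fun r => L0 r k t) (fun r => A r k - Fp r) (fun r => A r k - (x0 + r * y0)) rho _ delta hdelta).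
    + intros r hr. apply bounds; auto.
    + rewrite Leq, Fp0. reflexivity.
    + rewrite Leq. reflexivity.
    + replace (ln (rho * k) - y0) with ((ln (rho * k)) - y0) by ring.
      apply (is_derive_minus (fun r => A r k) Fp).
      * unfold A. auto_derive. nra. field. lra.
      * exact dFp.
    + unfold A. auto_derive. nra. field. lra.
Qed.
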